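(* Every uncountable space $X\in\mathsf{CB_0}(\mathbf{\Sigma}^1_1)$ has cardinality of the continuum.
   Context: $\mathcal{N}=\omega^\omega$ is the Baire space. $P\omega$ is the set of all subsets of $\omega$ with the Scott topology, whose basic open sets are $\{A\subseteq\omega\mid F\subseteq A\}$ for finite $F\subseteq\omega$. For a space $Y$, $\mathbf{\Sigma}^1_1(Y)$ is the set of projections $\{y\in Y\mid\exists p\in\mathcal{N}\,(p,y)\in A\}$ of sets $A\subseteq\mathcal{N}\times Y$ whose complement is a countable union of sets $U\setminus V$ with $U,V$ open in $\mathcal{N}\times Y$. $\mathsf{CB_0}(\mathbf{\Sigma}^1_1)$ is the class of spaces homeomorphic to a subspace $S\subseteq P\omega$ with $S\in\mathbf{\Sigma}^1_1(P\omega)$. *)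

(* Defs.v *)
From HB Require Import structures.
From mathcomp Require Import all_boot.
From mathcomp Require Import boolp classical_sets functions cardinality topology.

Set Implicit Arguments.
Unset Strict Implicit.
Unset Printing Implicit Defensive.

Local Open Scope classical_set_scope.

Definition baire := nat -> nat.
Definition Pomega := set nat.

Definition scott_open (U : set Pomega) : Prop :=
  forall A, U A ->
    exists F : set nat, finite_set F /\ F `<=` A /\
      (forall B : Pomega, F `<=` B -> U B).

(* Product topology on N x P(omega) (N with the usual product-of-discrete
   topology): basic open sets are [s] x {A | F `<=` A}, where [s] is the set
   of sequences extending the finite sequence s, and F is finite. *)
Definition baire_scott_open (W : set (baire * Pomega)) : Prop :=
  forall p A, W (p, A) ->
    exists (n : nat) (F : set nat), finite_set F /\ F `<=` A /\
      (forall (q : baire) (B : Pomega),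
          (forall i, (i < n)%N -> q i = p i) -> F `<=` B -> W (q, B)).

(* Sigma^1_1(P omega): projections along N of sets A `<=` N x P(omega) whose
   complement is a countable union of differences U_n \ V_n of open sets. *)
Definition Sigma11_Pomega (S : set Pomega) : Prop :=
  exists U V : nat -> set (baire * Pomega),
    (forall n, baire_scott_open (U n)) /\
    (forall n, baire_scott_open (V n)) /\
    S = [set y | exists p : baire,
                  ~ (exists n, U n (p, y) /\ ~ V n (p, y))].

Definition homeomorphic_to_subspace (X : topologicalType) (S : set Pomega)
  : Prop :=
  exists f : X -> Pomega,
    injective f /\ range f = S /\
    (forall U : set X,
        open U <-> exists V, scott_open V /\ f @` U = V `&` S).

Definition CB0_Sigma11 (X : topologicalType) : Prop :=
  exists S : set Pomega, Sigma11_Pomega S /\ homeomorphic_to_subspace X S.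

(* Main.v *)
Require Import Defs.
From mathcomp Require Import all_boot zify.
From mathcomp Require Import boolp classical_sets functions cardinality topology.

Local Open Scope classical_set_scope.
Set Warnings "-notation-overridden".
Set Implicit Arguments.
Unset Strict Implicit.

Lemma mkseq_eqP (T : Type) (f g : nat -> T) m :
  mkseq f m = mkseq g m <-> (forall i, (i < m)%N -> f i = g i).
Proof.
split.
- move=> H i Hi.
  have := congr1 (fun s => nth (f 0%N) s i) H.
  by rewrite !nth_mkseq.
- move=> H; apply/eq_in_map => i; rewrite mem_iota add0n => Hi; exact: H.
Qed.

Lemma countableU T (A B : set T) : countable A -> countable B -> countable (A `|` B).
Proof.
move=> cA cB.
have -> : A `|` B = \bigcup_(i in [set: bool]) (if i then A else B).
  apply/seteqP; split => x.
  - by case=> h; [exists true | exists false].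
  - by case=> -[] _ h; [left | right].
apply: bigcup_countable => //.
by case.
Qed.

Lemma uncount_minus T (E D : set T) : ~ countable E -> countable D ->
  exists y, E y /\ ~ D y.
Proof.
move=> nE cD; apply: contrapT => hn; apply: nE.
apply: (sub_countable _ cD); apply: subset_card_le => y Ey.
by apply: contrapT => nD; apply: hn; exists y.
Qed.

Lemma uncount_two T (E D : set T) : ~ countable E -> countable D ->
  exists y1 y2, [/\ E y1, E y2, ~ D y1, ~ D y2 & y1 <> y2].
Proof.
move=> nE cD.
have [y1 [E1 D1]] := uncount_minus nE cD.
have cD' : countable (D `|` [set y1]) by apply: countableU => //; exact: countable1.
have [y2 [E2 D2]] := uncount_minus nE cD'.
exists y1, y2; split => //.
- by move=> h; apply: D2; left.
- by move=> e; apply: D2; right.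
Qed.

Section Perfect.
Variable A : countType.
Definition pt := ((nat -> A) * (nat -> bool))%type.
Definition agree (P Q : pt) m := forall i, (i < m)%N -> P.1 i = Q.1 i /\ P.2 i = Q.2 i.

Lemma agree_sym P Q m : agree P Q m -> agree Q P m.
Proof. by move=> H i Hi; have [-> ->] := H i Hi. Qed.
Lemma agree_trans P Q R m : agree P Q m -> agree Q R m -> agree P R m.
Proof. by move=> H1 H2 i Hi; have [-> ->] := H1 i Hi; exact: H2. Qed.
Lemma agree_le P Q m m' : agree P Q m -> (m' <= m)%N -> agree P Q m'.
Proof. by move=> H le i Hi; apply: H; apply: leq_trans le. Qed.

Variable C : set pt.
Hypothesis Cclosed : forall P, (forall m, exists Q, C Q /\ agree P Q m) -> C P.

Definition G (Q : pt) m := [set y | exists x, C (x, y) /\ agree (x, y) Q m].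
Definition big Q m := ~ countable (G Q m).
Definition K P := C P /\ forall m, big P m.

Definition F (st : seq A * seq bool) :=
  [set y | exists x, C (x, y) /\ mkseq x (size st.1) = st.1 /\ mkseq y (size st.1) = st.2].
Definition D := \bigcup_(st in [set st | countable (F st)]) F st.

Lemma Dcount : countable D.
Proof. by apply: bigcup_countable. Qed.

Lemma inK x y : C (x, y) -> ~ D y -> K (x, y).
Proof.
move=> Cxy nD; split => // m cG; apply: nD.
exists (mkseq x m, mkseq y m); last first.
  by exists x; rewrite /= size_mkseq.
apply: (sub_countable _ cG); apply: subset_card_le => y' [x' [C' [e1 e2]]].
exists x'; split => //.
move: e1 e2; rewrite /= size_mkseq => /mkseq_eqP e1 /mkseq_eqP e2 i Hi.
by split; [exact: e1 | exact: e2].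
Qed.

Lemma pick2 Q m : big Q m -> exists P1 P2,
  [/\ K P1, K P2, agree P1 Q m, agree P2 Q m & P1.2 <> P2.2].
Proof.
move=> bQ; have [y1 [y2 [[x1 [C1 a1]] [x2 [C2 a2]] D1 D2 ne]]] := uncount_two bQ Dcount.
by exists (x1, y1), (x2, y2); split => //; apply: inK.
Qed.

Lemma split_ex Q m : K Q -> exists P1 P2 m',
  [/\ K P1, K P2, agree P1 Q m, agree P2 Q m &
     (m < m')%N /\ exists2 i, (i < m')%N & P1.2 i <> P2.2 i].
Proof.
move=> [_ bQ]; have [P1 [P2 [K1 K2 a1 a2 ne]]] := pick2 (bQ m).
have [i ni] : exists i, P1.2 i <> P2.2 i.
  by apply: contrapT => h; apply: ne; apply/funext => i; apply: contrapT => h'; apply: h; exists i.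
exists P1, P2, (maxn m i).+1; split => //; split.
  by rewrite ltnS leq_maxl.
by exists i => //; rewrite ltnS leq_maxr.
Qed.

End Perfect.

Section Scheme.
Variable A : countType.
Variable C : set (pt A).
Hypothesis Cclosed : forall P, (forall m, exists Q, C Q /\ agree P Q m) -> C P.
Variable sp : pt A * nat -> pt A * pt A * nat.
Hypothesis Hsp : forall Qm, K C Qm.1 -> [/\ K C (sp Qm).1.1, K C (sp Qm).1.2,
     agree (sp Qm).1.1 Qm.1 Qm.2, agree (sp Qm).1.2 Qm.1 Qm.2 &
     (Qm.2 < (sp Qm).2)%N /\ exists2 i, (i < (sp Qm).2)%N & (sp Qm).1.1.2 i <> (sp Qm).1.2.2 i].
Variable P0 : pt A.
Hypothesis KP0 : K C P0.

Fixpoint node (s : seq bool) : pt A * nat :=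
  match s with
  | [::] => (P0, 0%N)
  | b :: s' => let r := sp (node s') in ((if b then r.1.2 else r.1.1), r.2)
  end.

Lemma nodeK s : K C (node s).1.
Proof.
elim: s => [|b s IH] //=.
by have [K1 K2 _ _ _] := Hsp IH; case: b.
Qed.

Lemma node_step b s : agree (node (b :: s)).1 (node s).1 (node s).2 /\
   ((node s).2 < (node (b :: s)).2)%N.
Proof.
have [_ _ a1 a2 [lt _]] := Hsp (nodeK s).
by split => //=; case: b.
Qed.

Lemma agree_refl (P : pt A) m : agree P P m.
Proof. by []. Qed.

Variable b : nat -> bool.
Fixpoint pre n := match n with 0 => [::] | n'.+1 => b n' :: pre n' end.
Definition N n := node (pre n).

Lemma Nle k n : (k <= n)%N -> agree (N n).1 (N k).1 (N k).2 /\ ((N k).2 + (n - k) <= (N n).2)%N.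
Proof.
elim: n => [|n IH] le.
  by have -> : k = 0%N by lia.
have [->|ne] := eqVneq k n.+1.
  by split; [exact: agree_refl | rewrite subnn addn0].
have kn : (k <= n)%N by lia.
have [a lem] := IH kn.
have [a' lt'] := node_step (b n) (pre n).
rewrite /N /= in a' lt' *.
split.
  apply: agree_trans (agree_le a' _) a; rewrite /N in lem *; lia.
rewrite /N in lem *; lia.
Qed.

Lemma Nge n : (n <= (N n).2)%N.
Proof. have [_ h] := Nle (leq0n n); lia. Qed.

Definition lim : pt A := (fun i => (N i.+1).1.1 i, fun i => (N i.+1).1.2 i).

Lemma lim_agree n : agree lim (N n).1 (N n).2.
Proof.
move=> i Hi; rewrite /lim /=.
case: (leqP i.+1 n) => h.
  have [a _] := Nle h.
  have := a i (leq_trans (ltnSn i) (Nge i.+1)).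
  by move=> [-> ->].
have [a _] := Nle (ltnW h : (n <= i.+1)%N).
exact: a.
Qed.

Lemma limC : C lim.
Proof.
apply: Cclosed => m; exists (N m).1; split; first by have [] := nodeK (pre m).
exact: agree_le (lim_agree (n:=m)) (Nge m).
Qed.
End Scheme.

Lemma pre_eq (b b' : nat -> bool) n : (forall j, (j < n)%N -> b j = b' j) -> pre b n = pre b' n.
Proof.
elim: n => [|n IH] H //=.
by rewrite H // IH // => j jn; apply: H; apply: ltnW.
Qed.

Lemma perfect (A : countType) (C : set (pt A)) :
  (forall P, (forall m, exists Q, C Q /\ agree P Q m) -> C P) ->
  ~ countable [set y | exists x, C (x, y)] ->
  exists h : (nat -> bool) -> (nat -> bool), injective h /\ forall b, exists x, C (x, h b).
Proof.
move=> Cclosed nY.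
have Hex : forall Qm : pt A * nat, exists r : pt A * pt A * nat, K C Qm.1 ->
   [/\ K C r.1.1, K C r.1.2, agree r.1.1 Qm.1 Qm.2, agree r.1.2 Qm.1 Qm.2 &
     (Qm.2 < r.2)%N /\ exists2 i, (i < r.2)%N & r.1.1.2 i <> r.1.2.2 i].
  move=> Qm; case: (pselect (K C Qm.1)) => KQ; last by exists (Qm.1, Qm.1, 0%N).
  have [P1 [P2 [m' [K1 K2 a1 a2 [lt [i il ne]]]]]] := split_ex Qm.2 KQ.
  by exists (P1, P2, m') => _; split => //; split => //; exists i.
have [sp Hsp] := choice Hex.
have [y [[x Cxy] nD]] := uncount_minus nY (Dcount C).
have KP0 := inK Cxy nD.
exists (fun b => (lim sp (x, y) b).2); split; last first.
  move=> b; have := limC Cclosed Hsp KP0 b.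
  by case: (lim sp (x, y) b) => u v; exists u.
move=> b b' e; apply: contrapT => ne.
have ex : exists n, b n != b' n.
  apply: contrapT => h; apply: ne; apply/funext => n; apply: contrapT => h'.
  by apply: h; exists n; apply/eqP.
case: (ex_minnP ex) => n bn minn.
have pe : pre b n = pre b' n.
  apply: pre_eq => j jn; apply: contrapT => /eqP h.
  by have := minn j h; rewrite leqNgt jn.
have [_ _ _ _ [_ [i il nei]]] := Hsp _ (nodeK Hsp KP0 (pre b n)).
have a1 := lim_agree Hsp KP0 (b:=b) (n:=n.+1) il.
have il' : (i < (N sp (x, y) b' n.+1).2)%N by rewrite /N /= -pe.
have a2 := lim_agree Hsp KP0 (b:=b') (n:=n.+1) il'.
case: a1 => _ e1; case: a2 => _ e2.
have ei : (lim sp (x, y) b).2 i = (lim sp (x, y) b').2 i by rewrite e.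
move: ei; rewrite e1 e2 /N /= -pe.
move: bn; case: (b n); case: (b' n) => //= _ h; apply: nei => //; rewrite h.
Qed.

Lemma finite_bound (F : set nat) : finite_set F -> exists M, forall i, F i -> (i < M)%N.
Proof.
move=> /finite_seqP [s ->]; elim: s => [|a s [M HM]].
  by exists 0%N.
exists (maxn M a.+1) => i /=; rewrite inE => /orP [/eqP ->|Hi].
  by rewrite leq_maxr.
by apply: leq_trans (HM i Hi) (leq_maxl _ _).
Qed.

Definition CS (U V : nat -> set (baire * Pomega)) : set (pt (nat * nat)%type) := fun P =>
  forall n,
  ((P.1 n).2 = 0%N -> ~ U n ((fun i => (P.1 i).1), [set i | P.2 i])) /\
  (forall k, (P.1 n).2 = k.+1 -> forall (q : baire) (B : Pomega),
     (forall i, (i < k)%N -> q i = (P.1 i).1) ->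
     (forall i, (i < k)%N -> (B i <-> P.2 i)) -> V n (q, B)).

Lemma CS_closed U V : (forall n, baire_scott_open (U n)) ->
  forall P, (forall m, exists Q, CS U V Q /\ agree P Q m) -> CS U V P.
Proof.
move=> hU P H n; split.
- move=> z HU.
  have [n0 [F [fF [FY Hnb]]]] := hU n _ _ HU.
  have [M HM] := finite_bound fF.
  have [Q [CQ aQ]] := H (n0 + M + n.+1)%N.
  have [CQ1 _] := CQ n; apply: CQ1.
    by have [e _] := aQ n ltac:(lia); rewrite -e.
  apply: Hnb.
    by move=> i Hi; have [e _] := aQ i ltac:(lia); rewrite /= e.
  move=> i Fi; have Mi := HM i Fi.
  have [_ e] := aQ i ltac:(lia); rewrite /= -e; exact: FY i Fi.
- move=> k ek q B hq hB.
  have [Q [CQ aQ]] := H (k + n.+1)%N.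
  have [_ CQ2] := CQ n; apply: (CQ2 k).
  + by have [e _] := aQ n ltac:(lia); rewrite -e.
  + by move=> i Hi; have [e _] := aQ i ltac:(lia); rewrite -e; exact: hq.
  + by move=> i Hi; have [_ e] := aQ i ltac:(lia); rewrite -e; exact: hB.
Qed.

Lemma CS_proj U V x y : CS U V (x, y) ->
  exists p : baire, ~ (exists n, U n (p, [set i | y i]) /\ ~ V n (p, [set i | y i])).
Proof.
move=> H; exists (fun i => (x i).1) => -[n [HU nV]]; apply: nV.
have [H1 H2] := H n.
move: H1 H2 => /=; case: ((x n).2) => [H1 _|k _ H2]; first by exfalso; exact: H1.
by apply: (H2 k) => //.
Qed.

Lemma asbool_set (Y : set nat) : [set i | `[< Y i >]] = Y.
Proof. by apply/funext => i; apply/propext; split => /asboolP. Qed.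

Lemma proj_CS U V (hV : forall n, baire_scott_open (V n)) (Y : Pomega) :
  (exists p : baire, ~ (exists n, U n (p, Y) /\ ~ V n (p, Y))) ->
  exists x, CS U V (x, fun i => `[< Y i >]).
Proof.
move=> [p Hp].
have Hex : forall n, exists r : nat, (r = 0%N -> ~ U n (p, Y)) /\
   (forall k, r = k.+1 -> forall (q : baire) (B : Pomega),
     (forall i, (i < k)%N -> q i = p i) ->
     (forall i, (i < k)%N -> (B i <-> `[< Y i >])) -> V n (q, B)).
  move=> n; case: (pselect (U n (p, Y))) => HU; last by exists 0%N.
  have HV : V n (p, Y) by apply: contrapT => nV; apply: Hp; exists n.
  have [n0 [F [fF [FY Hnb]]]] := hV n _ _ HV.
  have [M HM] := finite_bound fF.
  exists (n0 + M).+1; split => // k [<-] q B hq hB.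
  apply: Hnb; first by move=> i Hi; apply: hq; lia.
  move=> i Fi; have Mi := HM i Fi.
  by apply/(hB i ltac:(lia)); apply/asboolP; exact: FY.
have [r Hr] := choice Hex.
exists (fun i => (p i, r i)) => n /=; rewrite asbool_set; exact: Hr.
Qed.

Lemma is_true_inj (a b : bool) : is_true a = is_true b -> a = b.
Proof.
case: a; case: b => // e.
  by have : is_true false by rewrite -e.
by have : is_true false by rewrite e.
Qed.

Unset Implicit Arguments.

Theorem proposition3p5 (X : topologicalType) :
  CB0_Sigma11 X -> ~ countable [set: X] ->
  ([set: X] #= [set: set nat])%card.
Proof.
move=> [S [[U [V [hU [hV eS]]]] [f [finj [rf _]]]]] nX.
have nS : ~ countable S.
  move=> cS; apply: nX; have /countable_injP [g gi] := cS.
  apply/countable_injP; exists (fun a => g (f a)) => a b _ _ e; apply: finj.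
  by apply: gi => //; apply/mem_set; rewrite -rf; [exists a | exists b].
have nG : ~ countable [set y | exists x, CS U V (x, y)].
  move=> cG; apply: nS; have /countable_injP [g gi] := cG.
  apply/countable_injP; exists (fun Y => g (fun i => `[< Y i >])).
  move=> Y1 Y2 /set_mem h1 /set_mem h2 e.
  rewrite eS in h1 h2.
  have e' := gi _ _ (mem_set (proj_CS hV h1)) (mem_set (proj_CS hV h2)) e.
  by have := congr1 (fun u : nat -> bool => [set i | u i]) e'; rewrite /= !asbool_set.
have [h [hi hG]] := perfect (CS_closed (V:=V) hU) nG.
have e1 : ([set: X] #= S)%card.
  rewrite -rf; apply: card_esym; apply: inj_card_eq => a b _ _; exact: finj.
apply: (card_eq_trans e1); apply: Cantor_Bernstein; first exact: card_leT.
apply/pcard_leP; apply/injfunPex.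
exists (fun Z : set nat => [set i | h (fun j => `[< Z j >]) i]).
  move=> Z _; rewrite eS; have [x Cx] := hG (fun j => `[< Z j >]).
  exact: CS_proj Cx.
move=> Z1 Z2 _ _ e.
have ee : h (fun j => `[< Z1 j >]) = h (fun j => `[< Z2 j >]).
  apply/funext => i; apply: is_true_inj.
  exact: (congr1 (fun s : set nat => s i) e).
have := hi _ _ ee => e'.
by have := congr1 (fun u : nat -> bool => [set i | u i]) e'; rewrite /= !asbool_set.
Qed.
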